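(* Let $A$ be a torsion-free $\mathbb{Z}_{(p)}$-algebra and $F$ a formal group law over $A$. Then $F$ is $p^n$-typical if and only if its logarithm has the form $\sum_{i\ge0}l_ix^{p^{ni}}$ with $l_i\in A\otimes\mathbb{Q}$.
   Context: A formal group law $F$ over a $\mathbb{Z}_{(p)}$-algebra is $p$-typical in the sense of Cartier (over a torsion-free $\mathbb{Z}_{(p)}$-algebra, this is equivalent to its logarithm having the form $\sum_{i\ge0}l_ix^{p^i}$). A power series in $x$ is $p^n$-gradable if it has the form $\sum_{j\ge0}a_jx^{1+j(p^n-1)}$. $F$ is $p^n$-typical if it is $p$-typical and the series $[p]_F(x)$ ($p$-fold formal sum of $x$) is $p^n$-gradable. *)

(* Defs.v *)
From HB Require Import structures.
From mathcomp Require Import all_boot all_order all_algebra.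
From mathcomp Require Import mpoly.
Set Implicit Arguments. Unset Strict Implicit. Unset Printing Implicit Defensive.
Import GRing.Theory.
Local Open Scope ring_scope.

Definition pseries (k : nat) (R : Type) := 'X_{1..k} -> R.

Definition ptrunc (R : nzRingType) k (N : nat) (f : pseries k R) : {mpoly R[k]} :=
  \sum_(m : 'X_{1..k < N.+1}) f m *: 'X_[bmnm m].

Definition pvar (R : nzRingType) k (i : 'I_k) : pseries k R :=
  fun m => (m == U_(i)%MM)%:R.

Definition pzero (R : nzRingType) k : pseries k R := fun _ => 0.

Arguments pzero R k : clear implicits.
Arguments pvar R {k} i.

Definition padd (R : nzRingType) k (f g : pseries k R) : pseries k R :=
  fun m => f m + g m.

(* substitution f(g_0, ..., g_{j-1}) of series g_i in k variables (with   *)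
(* zero constant term) into a series f in j variables.  The coefficient    *)
(* of a monomial m of degree N only depends on the truncations at degree N. *)
Definition pcomp (R : nzRingType) j k (f : pseries j R) (g : 'I_j -> pseries k R)
  : pseries k R :=
  fun m => (comp_mpoly [tuple ptrunc (mdeg m) (g i) | i < j]
                       (ptrunc (mdeg m) f)) @_ m.

Definition pair2 (T : Type) (a b : T) : 'I_2 -> T :=
  fun i => if val i == 0%N then a else b.

Definition pmap (R S : Type) k (phi : R -> S) (f : pseries k R) : pseries k S :=
  fun m => phi (f m).

Definition is_fgl (R : nzRingType) (F : pseries 2 R) : Prop :=
  [/\
      pcomp F (pair2 (pvar R ord0) (pzero R 1)) = pvar R ord0,
      pcomp F (pair2 (pzero R 1) (pvar R ord0)) = pvar R ord0,
      pcomp F (pair2 (pvar R (@Ordinal 2 1 isT)) (pvar R (@Ordinal 2 0 isT))) = F &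
      pcomp F (pair2 (pcomp F (pair2 (pvar R (@Ordinal 3 0 isT)) (pvar R (@Ordinal 3 1 isT))))
                     (pvar R (@Ordinal 3 2 isT)))
      = pcomp F (pair2 (pvar R (@Ordinal 3 0 isT))
                     (pcomp F (pair2 (pvar R (@Ordinal 3 1 isT)) (pvar R (@Ordinal 3 2 isT)))))].

Fixpoint fgl_mul (R : nzRingType) (F : pseries 2 R) (m : nat) : pseries 1 R :=
  match m with
  | 0%N => pzero R 1
  | m'.+1 => pcomp F (pair2 (pvar R ord0) (fgl_mul F m'))
  end.

Definition torsion_free (A : nzRingType) : Prop :=
  forall (k : nat) (a : A), a *+ k = 0 -> k = 0%N \/ a = 0.

Definition Zp_local_algebra (p : nat) (A : unitRingType) : Prop :=
  forall k : nat, coprime k p -> (k%:R : A) \is a GRing.unit.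

(* iota : A -> K exhibits K as A (x) Q: K is a Q-algebra, iota is      *)
(* injective, and every element of K is iota(a)/k for some a, k > 0.    *)
Definition is_rationalization (A K : comUnitRingType) (iota : A -> K) : Prop :=
  [/\ forall k : nat, (0 < k)%N -> (k%:R : K) \is a GRing.unit,
      injective iota &
      forall x : K, exists (a : A) (k : nat), (0 < k)%N /\ x * k%:R = iota a].

Definition is_fgl_log (A K : comUnitRingType) (iota : A -> K)
    (F : pseries 2 A) (l : pseries 1 K) : Prop :=
  [/\ l 0%MM = 0, l (U_(ord0))%MM = 1 &
      pcomp l (fun _ => pmap iota F)
      = padd (pcomp l (fun _ => pvar K (@Ordinal 2 0 isT)))
             (pcomp l (fun _ => pvar K (@Ordinal 2 1 isT)))].

Definition supported_in (R : nzRingType) (f : pseries 1 R) (P : nat -> Prop) :=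
  forall m : 'X_{1..1}, f m != 0 -> P (mdeg m).

Definition pn_gradable (R : nzRingType) (p n : nat) (f : pseries 1 R) : Prop :=
  supported_in f (fun d => exists j : nat, d = (1 + j * (p ^ n - 1))%N).

Definition p_typical (A K : comUnitRingType) (iota : A -> K) (p : nat)
    (F : pseries 2 A) : Prop :=
  forall l : pseries 1 K, is_fgl_log iota F l ->
    supported_in l (fun d => exists i : nat, d = (p ^ i)%N).

Definition pn_typical (A K : comUnitRingType) (iota : A -> K) (p n : nat)
    (F : pseries 2 A) : Prop :=
  p_typical iota p F /\ pn_gradable p n (fgl_mul F p).

(* Main.v *)
Require Import Defs.
From HB Require Import structures.
From mathcomp Require Import all_boot all_order all_algebra.
From mathcomp Require Import mpoly.
From mathcomp Require Import zify ring.
Import Defs.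
Set Implicit Arguments. Unset Strict Implicit. Unset Printing Implicit Defensive.
Import GRing.Theory.

Lemma NT1 p n i : (0 < p)%N -> p ^ (n * i) = 1 %[mod p ^ n - 1].
Proof.
move=> hp; set M := (p ^ n - 1)%N.
have hM : p ^ n = (M + 1)%N by rewrite /M; have := expn_gt0 p n; rewrite hp /=; lia.
by rewrite expnM -modnXm hM modnDl modnXm exp1n.
Qed.

Lemma NT2 p n k : (1 < p)%N -> ~~ (n %| k) -> p ^ k != 1 %[mod p ^ n - 1].
Proof.
move=> hp hk; case: n hk => [|n] hk.
  rewrite dvd0n in hk; rewrite expn0 subnn !modn0.
  have : (p ^ 0 < p ^ k)%N by rewrite ltn_exp2l //; lia.
  by rewrite expn0; case: (p ^ k) => // -[].
set r := k %% n.+1.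
have hr0 : (0 < r)%N by move: hk; rewrite /dvdn -/r; case: r.
have hrn : (r < n.+1)%N by rewrite ltn_mod.
have hn : (1 <= n)%N by lia.
have hk' : k = (k %/ n.+1 * n.+1 + r)%N by rewrite /r -divn_eq.
have e1 : p ^ k = p ^ r %[mod p ^ n.+1 - 1].
  by rewrite hk' expnD (mulnC (k %/ n.+1)) -modnMml NT1 ?modnMml ?mul1n //; lia.
rewrite e1.
have h1 : (p ^ r <= p ^ n)%N by rewrite leq_exp2l //; lia.
have h2 : (p <= p ^ n)%N by rewrite -{1}(expn1 p) leq_exp2l.
have h3 : (p ^ n.+1 = p * p ^ n)%N by rewrite expnS.
have h4 : (1 < p ^ r)%N by rewrite -{1}(expn0 p) ltn_exp2l.
rewrite !modn_small; try nia.
Qed.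

Lemma NT3 d M : (0 < d)%N -> d = 1 %[mod M] -> exists j, d = (1 + j * M)%N.
Proof.
move=> hd e; exists ((d - 1) %/ M).
have e' : (d - 1) %% M = 0%N.
  have : (d - 1 + 1) %% M = (0 + 1) %% M by rewrite subnK // add0n.
  by move/eqP; rewrite eqn_modDr mod0n => /eqP.
have := divn_eq (d - 1) M; rewrite e' addn0; lia.
Qed.

Local Open Scope ring_scope.

Section Low.
Variable (R : comNzRingType) (k : nat).
Implicit Types (P Q : {mpoly R[k]}).

Definition lowdeg (a : nat) P := forall m : 'X_{1..k}, (mdeg m < a)%N -> P@_m = 0.

Lemma lowdeg0 a : lowdeg a (0 : {mpoly R[k]}).
Proof. by move=> m _; rewrite mcoeff0. Qed.

Lemma lowdegD a P Q : lowdeg a P -> lowdeg a Q -> lowdeg a (P + Q).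
Proof. by move=> hP hQ m hm; rewrite mcoeffD hP // hQ // addr0. Qed.

Lemma lowdegN a P : lowdeg a P -> lowdeg a (- P).
Proof. by move=> hP m hm; rewrite mcoeffN hP // oppr0. Qed.

Lemma lowdegB a P Q : lowdeg a P -> lowdeg a Q -> lowdeg a (P - Q).
Proof. by move=> hP hQ; apply: lowdegD => //; apply: lowdegN. Qed.

Lemma lowdegZ a c P : lowdeg a P -> lowdeg a (c *: P).
Proof. by move=> hP m hm; rewrite mcoeffZ hP // mulr0. Qed.

Lemma lowdeg_sum a (I : Type) (r : seq I) (F : I -> {mpoly R[k]}) :
  (forall i, lowdeg a (F i)) -> lowdeg a (\sum_(i <- r) F i).
Proof.
move=> h; elim/big_ind: _ => //; first exact: lowdeg0.
by move=> x y; apply: lowdegD.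
Qed.

Lemma lowdegW a b P : (b <= a)%N -> lowdeg a P -> lowdeg b P.
Proof. by move=> hba hP m hm; apply: hP; apply: leq_trans hm hba. Qed.

Lemma lowdegM a b P Q : lowdeg a P -> lowdeg b Q -> lowdeg (a + b) (P * Q).
Proof.
move=> hP hQ m hm; rewrite mcoeffM big1 // => -[k1 k2] /= /eqP e.
have {}hm : (mdeg k1 + mdeg k2 < a + b)%N by rewrite -mdegD -e.
case: (ltnP (mdeg k1) a) => h1; first by rewrite hP // mul0r.
have h2 : (mdeg k2 < b)%N by lia.
by rewrite hQ // mulr0.
Qed.

Lemma lowdegMl a P Q : lowdeg a P -> lowdeg a (P * Q).
Proof.
move=> hP; rewrite -[a]addn0; apply: lowdegM => // m; by rewrite ltn0.
Qed.

Lemma lowdegMr a P Q : lowdeg a Q -> lowdeg a (P * Q).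
Proof. by move=> hQ; rewrite mulrC; apply: lowdegMl. Qed.

Lemma lowdeg_any P : lowdeg 0 P.
Proof. by move=> m; rewrite ltn0. Qed.

Lemma lowdeg1 : lowdeg 0 (1 : {mpoly R[k]}).
Proof. exact: lowdeg_any. Qed.

Lemma lowdegX a P e : lowdeg a P -> lowdeg (a * e) (P ^+ e).
Proof.
move=> hP; elim: e => [|e ih]; first by rewrite muln0 => m; rewrite ltn0.
by rewrite exprS mulnS; apply: lowdegM.
Qed.

Lemma lowdeg_prod (I : finType) (a : I -> nat) (F : I -> {mpoly R[k]}) :
  (forall i, lowdeg (a i) (F i)) -> lowdeg (\sum_i a i) (\prod_i F i).
Proof.
move=> h; apply: (big_ind2 (fun x y => lowdeg x y)) => //.
by move=> x1 x2 y1 y2; apply: lowdegM.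
Qed.

Definition agree N P Q := lowdeg N.+1 (P - Q).

Lemma agree_coef N P Q m : agree N P Q -> (mdeg m <= N)%N -> P@_m = Q@_m.
Proof. by move=> h hm; apply/eqP; rewrite -subr_eq0 -mcoeffB; apply/eqP/h. Qed.

Lemma agreeP N P Q : (forall m, (mdeg m <= N)%N -> P@_m = Q@_m) -> agree N P Q.
Proof. by move=> h m hm; rewrite mcoeffB h // subrr. Qed.

Lemma agree_refl N P : agree N P P.
Proof. by apply: agreeP. Qed.

Lemma agree_sym N P Q : agree N P Q -> agree N Q P.
Proof. by move=> h; apply: agreeP => m hm; rewrite (agree_coef h). Qed.

Lemma agree_trans N P Q S : agree N P Q -> agree N Q S -> agree N P S.
Proof. by move=> h1 h2; apply: agreeP => m hm; rewrite (agree_coef h1) ?(agree_coef h2). Qed.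

Lemma agreeD N P Q P' Q' : agree N P Q -> agree N P' Q' -> agree N (P + P') (Q + Q').
Proof.
move=> h1 h2; rewrite /agree (_ : _ - _ = (P - Q) + (P' - Q')); first exact: lowdegD.
by rewrite opprD addrACA.
Qed.

Lemma agreeM N P Q P' Q' : agree N P Q -> agree N P' Q' -> agree N (P * P') (Q * Q').
Proof.
move=> h1 h2; rewrite /agree (_ : _ - _ = (P - Q) * P' + Q * (P' - Q')).
  by apply: lowdegD; [apply: lowdegMl | apply: lowdegMr].
by rewrite mulrBl mulrBr addrA subrK.
Qed.

Lemma agreeZ N c P Q : agree N P Q -> agree N (c *: P) (c *: Q).
Proof. by move=> h; rewrite /agree -scalerBr; apply: lowdegZ. Qed.

Lemma agreeX N P Q e : agree N P Q -> agree N (P ^+ e) (Q ^+ e).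
Proof.
move=> h; elim: e => [|e ih]; first by rewrite !expr0; apply: agree_refl.
by rewrite !exprS; apply: agreeM.
Qed.

Lemma agree_sum N (I : Type) (r : seq I) (F G : I -> {mpoly R[k]}) :
  (forall i, agree N (F i) (G i)) -> agree N (\sum_(i <- r) F i) (\sum_(i <- r) G i).
Proof.
move=> h; apply: (big_ind2 (fun x y => agree N x y)) => //.
- exact: agree_refl.
- by move=> x1 x2 y1 y2; apply: agreeD.
Qed.

Lemma agree_prod N (I : finType) (F G : I -> {mpoly R[k]}) :
  (forall i, agree N (F i) (G i)) -> agree N (\prod_i F i) (\prod_i G i).
Proof.
move=> h; apply: (big_ind2 (fun x y => agree N x y)) => //.
- exact: agree_refl.
- by move=> x1 x2 y1 y2; apply: agreeM.
Qed.

Definition cong (M r : nat) P := forall m, P@_m != 0 -> mdeg m = r %[mod M].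

Lemma congM M r s P Q : cong M r P -> cong M s Q -> cong M (r + s) (P * Q).
Proof.
move=> hP hQ m hm0; apply/eqP; apply: contraNT hm0 => hm; apply/eqP.
rewrite mcoeffM big1 // => -[k1 k2] /= /eqP e.
have [h1|h1] := eqVneq (P@_k1) 0; first by rewrite h1 mul0r.
have [h2|h2] := eqVneq (Q@_k2) 0; first by rewrite h2 mulr0.
have e2 : mdeg m = (mdeg k1 + mdeg k2)%N by rewrite -mdegD -e.
have e3 : mdeg m = r + s %[mod M] by rewrite e2 -modnDm (hP _ h1) (hQ _ h2) modnDm.
by rewrite e3 eqxx in hm.
Qed.

Lemma cong1 M : cong M 0 (1 : {mpoly R[k]}).
Proof.
move=> m; rewrite mcoeff1; case: (boolP (m == @mnm0 k)) => [/eqP ->|_].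
  by rewrite mdeg0.
by rewrite eqxx.
Qed.

Lemma congX M r P e : cong M r P -> cong M (r * e) (P ^+ e).
Proof.
move=> h; elim: e => [|e ih]; first by rewrite muln0; apply: cong1.
by rewrite exprS mulnS; apply: congM.
Qed.

Lemma cong_eq M r s P : r = s %[mod M] -> cong M r P -> cong M s P.
Proof. by move=> e h m /h ->. Qed.

End Low.


Section Trunc.
Variable (R : comNzRingType).

Lemma mcoeff_ptrunc k N (f : pseries k R) m :
  (ptrunc N f)@_m = if (mdeg m <= N)%N then f m else 0.
Proof.
rewrite /ptrunc raddf_sum /=.
under eq_bigr => i _ do rewrite mcoeffZ mcoeffX.
case: ifP => hm.
  have hm' : (mdeg m < N.+1)%N by [].
  rewrite (bigD1 (BMultinom hm')) //= eqxx mulr1 big1 ?addr0 // => i hi.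
  suff -> : (bmnm i == m) = false by rewrite mulr0.
  by apply/negbTE; apply: contra hi => /eqP hi; apply/eqP/val_inj.
rewrite big1 // => i _.
suff -> : (bmnm i == m) = false by rewrite mulr0.
apply/negbTE/eqP => e; have := bmdeg i; rewrite e ltnS hm.
by [].
Qed.

Lemma ptrunc0 k (f : pseries k R) : ptrunc 0 f = (f 0%MM)%:MP.
Proof.
apply/mpolyP => m; rewrite mcoeff_ptrunc mcoeffC leqn0 mdeg_eq0.
by case: eqP => [->|]; rewrite ?mulr1 ?mulr0.
Qed.

Lemma ptruncD k N (f g : pseries k R) : ptrunc N (padd f g) = ptrunc N f + ptrunc N g.
Proof.
apply/mpolyP => m; rewrite mcoeffD !mcoeff_ptrunc /padd.
by case: ifP; rewrite ?addr0.
Qed.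

Lemma agree_ptrunc k d N (f : pseries k R) : (d <= N)%N -> agree d (ptrunc d f) (ptrunc N f).
Proof.
move=> hd; apply: agreeP => m hm; rewrite !mcoeff_ptrunc hm.
by rewrite (leq_trans hm hd).
Qed.

Lemma lowdeg1_ptrunc k N (f : pseries k R) : f 0%MM = 0 -> lowdeg 1 (ptrunc N f).
Proof.
move=> f0 m; rewrite ltnS leqn0 mdeg_eq0 => /eqP ->.
by rewrite mcoeff_ptrunc mdeg0 leq0n.
Qed.

Lemma lowdeg_comp n k b a (q : n.-tuple {mpoly R[k]}) (P : {mpoly R[n]}) :
  (forall i, lowdeg b (tnth q i)) -> lowdeg a P -> lowdeg (a * b) (comp_mpoly q P).
Proof.
move=> hq hP; rewrite comp_mpolyE; apply: lowdeg_sum => mm.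
case: (ltnP (mdeg mm) a) => ha.
  by rewrite hP // scale0r; apply: lowdeg0.
apply: lowdegZ.
apply: (@lowdegW _ _ (\sum_i (b * mm i))%N).
  rewrite -big_distrr /= -mdegE mulnC; exact: leq_mul.
apply: lowdeg_prod => i; exact: lowdegX.
Qed.

Lemma agree_comp n k N (q q' : n.-tuple {mpoly R[k]}) (P P' : {mpoly R[n]}) :
  (forall i, lowdeg 1 (tnth q i)) -> (forall i, agree N (tnth q i) (tnth q' i)) ->
  agree N P P' -> agree N (comp_mpoly q P) (comp_mpoly q' P').
Proof.
move=> hq hqq hP; apply: (@agree_trans _ _ _ _ (comp_mpoly q P')).
  rewrite /agree -comp_mpolyB -[N.+1]muln1; exact: lowdeg_comp.
rewrite !comp_mpolyE; apply: agree_sum => mm; apply: agreeZ.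
by apply: agree_prod => i; apply: agreeX.
Qed.

Lemma comp_mpolyA n k j (lq : k.-tuple {mpoly R[j]}) (lp : n.-tuple {mpoly R[k]})
  (p : {mpoly R[n]}) :
  comp_mpoly lq (comp_mpoly lp p) = comp_mpoly [tuple comp_mpoly lq (tnth lp i) | i < n] p.
Proof.
rewrite [comp_mpoly lp p]comp_mpolyE raddf_sum [RHS]comp_mpolyE /=.
apply: eq_bigr => mm _; rewrite comp_mpolyZ rmorph_prod; congr (_ *: _).
by apply: eq_bigr => i _; rewrite rmorphXn tnth_mktuple.
Qed.

End Trunc.

Lemma ptrunc_map (A K : comNzRingType) (iota : {rmorphism A -> K}) k N (f : pseries k A) :
  ptrunc N (pmap iota f) = map_mpoly iota (ptrunc N f).
Proof.
apply/mpolyP => m; rewrite mcoeff_map_mpoly !mcoeff_ptrunc /pmap.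
case: ifP => _ //; by rewrite raddf0.
Qed.

Lemma map_comp_mpoly (A K : comNzRingType) (iota : {rmorphism A -> K}) n k
  (lq : n.-tuple {mpoly A[k]}) (p : {mpoly A[n]}) :
  map_mpoly iota (comp_mpoly lq p) =
  comp_mpoly [tuple map_mpoly iota (tnth lq i) | i < n] (map_mpoly iota p).
Proof.
rewrite comp_mpolyE raddf_sum /=.
rewrite [p in RHS]mpolyE [map_mpoly iota (\sum_(_ <- _) _)]raddf_sum.
rewrite [comp_mpoly _ (\sum_(_ <- _) _)]raddf_sum.
apply: eq_bigr => mm _ /=; rewrite !map_mpolyZ map_mpolyX comp_mpolyZ comp_mpolyX.
rewrite rmorph_prod /=; congr (_ *: _).
by apply: eq_bigr => i _; rewrite rmorphXn tnth_mktuple.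
Qed.


Section PComp.
Variable (R : comNzRingType).

Lemma pcomp_trunc j k (f : pseries j R) (g : 'I_j -> pseries k R) m N :
  (forall i, g i 0%MM = 0) -> (mdeg m <= N)%N ->
  pcomp f g m = (comp_mpoly [tuple ptrunc N (g i) | i < j] (ptrunc N f))@_m.
Proof.
move=> g0 hm; rewrite /pcomp; apply: (agree_coef (N := mdeg m)) => //.
apply: agree_comp.
- by move=> i; rewrite tnth_mktuple; apply: lowdeg1_ptrunc.
- by move=> i; rewrite !tnth_mktuple; apply: agree_ptrunc.
- exact: agree_ptrunc.
Qed.

Lemma pcompE j k (f : pseries j R) (g : 'I_j -> pseries k R) m :
  pcomp f g m = (comp_mpoly [tuple ptrunc (mdeg m) (g i) | i < j] (ptrunc (mdeg m) f))@_m.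
Proof. by []. Qed.

Lemma pcomp0 j k (f : pseries j R) (g : 'I_j -> pseries k R) : pcomp f g 0%MM = f 0%MM.
Proof. by rewrite /pcomp mdeg0 ptrunc0 comp_mpolyC mcoeffC eqxx mulr1. Qed.

Lemma eq_ptrunc k N (f f' : pseries k R) : f =1 f' -> ptrunc N f = ptrunc N f'.
Proof. by move=> e; apply/mpolyP => m; rewrite !mcoeff_ptrunc e. Qed.

Lemma eq_pcomp j k (f f' : pseries j R) (g g' : 'I_j -> pseries k R) :
  f =1 f' -> (forall i, g i =1 g' i) -> pcomp f g =1 pcomp f' g'.
Proof.
move=> ef eg m; rewrite /pcomp (eq_ptrunc _ ef); congr (_ @_ _); congr comp_mpoly.
by apply: eq_mktuple => i; apply: eq_ptrunc.
Qed.

Lemma pcompA j k l (f : pseries j R) (g : 'I_j -> pseries k R) (h : 'I_k -> pseries l R) :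
  (forall i, g i 0%MM = 0) -> (forall i, h i 0%MM = 0) ->
  pcomp f (fun i => pcomp (g i) h) =1 pcomp (pcomp f g) h.
Proof.
move=> g0 h0 m; set d := mdeg m.
rewrite [LHS]pcompE [RHS]pcompE -/d.
set H := [tuple ptrunc d (h i) | i < k].
set G := [tuple ptrunc d (g i) | i < j].
have hH : forall i, lowdeg 1 (tnth H i).
  by move=> i; rewrite tnth_mktuple; apply: lowdeg1_ptrunc.
apply: (agree_coef (N := d)) => //.
apply: (@agree_trans _ _ _ _
   (comp_mpoly [tuple comp_mpoly H (tnth G i) | i < j] (ptrunc d f))).
  apply: agree_comp.
  - by move=> i; rewrite tnth_mktuple; apply: lowdeg1_ptrunc; rewrite pcomp0.
  - move=> i; rewrite !tnth_mktuple; apply: agreeP => m' hm'.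
    by rewrite mcoeff_ptrunc hm' (pcomp_trunc _ h0 hm').
  - exact: agree_refl.
rewrite -comp_mpolyA; apply: agree_comp => //.
- by move=> i; apply: agree_refl.
- apply: agreeP => m' hm'.
  by rewrite mcoeff_ptrunc hm' (pcomp_trunc _ g0 hm').
Qed.

Lemma ptrunc_var k N (i : 'I_k) : (1 <= N)%N -> ptrunc N (pvar R i) = 'X_i.
Proof.
move=> hN; apply/mpolyP => m; rewrite mcoeff_ptrunc mcoeffX /pvar eq_sym.
case: ifP => // hm; case: eqP => // e.
by move: hm; rewrite -e mdeg1 hN.
Qed.

Lemma pcomp_var j k (i : 'I_j) (g : 'I_j -> pseries k R) :
  g i 0%MM = 0 -> pcomp (pvar R i) g =1 g i.
Proof.
move=> g0 m; case: (posnP (mdeg m)) => hm.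
  move/eqP: hm; rewrite mdeg_eq0 => /eqP ->.
  by rewrite pcomp0 g0 /pvar eq_sym mnm1_eq0.
rewrite /pcomp ptrunc_var // comp_mpolyXU -tnth_nth tnth_mktuple.
by rewrite mcoeff_ptrunc leqnn.
Qed.

Lemma pcomp_vars j (f : pseries j R) : pcomp f (fun i => pvar R i) =1 f.
Proof.
move=> m; case: (posnP (mdeg m)) => hm.
  by move/eqP: hm; rewrite mdeg_eq0 => /eqP ->; rewrite pcomp0.
rewrite pcompE (_ : [tuple _ | i < j] = [tuple 'X_i | i < j]).
  by rewrite comp_mpoly_id mcoeff_ptrunc leqnn.
by apply: eq_mktuple => i; apply: ptrunc_var.
Qed.

Lemma pcompD j k (f f' : pseries j R) (g : 'I_j -> pseries k R) :
  pcomp (padd f f') g =1 padd (pcomp f g) (pcomp f' g).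
Proof. by move=> m; rewrite /pcomp /padd ptruncD comp_mpolyD mcoeffD. Qed.

Lemma pcomp_zero j (f : pseries 1 R) :
  f 0%MM = 0 -> pcomp f (fun _ => pzero R j) =1 pzero R j.
Proof.
move=> f0 m; rewrite /pcomp /pzero.
have := @lowdeg_comp R 1 j (mdeg m).+1 1 [tuple ptrunc (mdeg m) (pzero R j) | i < 1]
  (ptrunc (mdeg m) f).
rewrite mul1n; apply => //; last exact: lowdeg1_ptrunc.
by move=> i m' _; rewrite tnth_mktuple mcoeff_ptrunc /pzero; case: ifP.
Qed.

End PComp.

Lemma pmap_pcomp (A K : comNzRingType) (iota : {rmorphism A -> K}) j k
   (f : pseries j A) (g : 'I_j -> pseries k A) :
  pmap iota (pcomp f g) =1 pcomp (pmap iota f) (fun i => pmap iota (g i)).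
Proof.
move=> m; rewrite /pcomp {1}/pmap -mcoeff_map_mpoly map_comp_mpoly ptrunc_map.
congr (_ @_ _); congr comp_mpoly; apply: eq_mktuple => i.
by rewrite tnth_mktuple ptrunc_map.
Qed.


Definition mono (e : nat) : 'X_{1..1} := (U_(ord0) *+ e)%MM.

Lemma mdeg_mono e : mdeg (mono e) = e.
Proof. by rewrite /mono mdegMn mdeg1 mul1n. Qed.

Lemma mono_ord0 e : mono e ord0 = e.
Proof. by rewrite /mono mulmnE mnm1E eqxx mul1n. Qed.

Lemma mono1_eq (m1 m2 : 'X_{1..1}) : mdeg m1 = mdeg m2 -> m1 = m2.
Proof.
rewrite !mdegE !big_ord1 => e; apply/mnmP => i.
by rewrite (ord1 i).
Qed.

Lemma mono_mdeg (m : 'X_{1..1}) : m = mono (mdeg m).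
Proof. by apply: mono1_eq; rewrite mdeg_mono. Qed.

Section OneVar.
Variable (R : comNzRingType).

Lemma pcomp1E k (h : pseries 1 R) (f : pseries k R) m :
  pcomp h (fun _ => f) m =
  \sum_(e < (mdeg m).+1) h (mono e) * ((ptrunc (mdeg m) f) ^+ e)@_m.
Proof.
rewrite pcompE; set d := mdeg m; set T := ptrunc d f.
rewrite [ptrunc d h]/ptrunc [comp_mpoly _ (\sum_i _)]raddf_sum [mcoeff _ (\sum_i _)]raddf_sum /=.
under eq_bigr => mm _ do
  rewrite comp_mpolyZ comp_mpolyX big_ord1 tnth_mktuple mcoeffZ.
have hmono : forall e : 'I_d.+1, (mdeg (mono e) < d.+1)%N.
  by move=> e; rewrite mdeg_mono.
pose phi (e : 'I_d.+1) : 'X_{1..1 < d.+1} := BMultinom (hmono e).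
rewrite (reindex phi) /=.
  by apply: eq_bigr => e _; rewrite mono_ord0.
exists (fun mm : 'X_{1..1 < d.+1} => Ordinal (bmdeg mm)) => [e _|mm _].
  by apply: val_inj; rewrite /= mdeg_mono.
by apply: val_inj; rewrite /= -mono_mdeg.
Qed.

Lemma ptrunc_top (f : pseries 1 R) c m :
  f 0%MM = 0 -> f (U_(ord0))%MM = c ->
  ((ptrunc (mdeg m) f) ^+ (mdeg m))@_m = c ^+ (mdeg m).
Proof.
move=> f0 fU; set d := mdeg m; set T := ptrunc d f.
case: (posnP d) => hd.
  by rewrite hd !expr0 mcoeff1; move: hd; rewrite /d => /eqP; rewrite mdeg_eq0 => ->.
have low2 : lowdeg 2 (T - c *: 'X_ord0).
  move=> m'; rewrite mcoeffB mcoeffZ mcoeffX mcoeff_ptrunc.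
  case: (posnP (mdeg m')) => h0.
    move/eqP: (h0); rewrite mdeg_eq0 => /eqP ->; rewrite f0.
    by rewrite mnm1_eq0 if_same mulr0 subr0.
  move=> h2; have h1 : mdeg m' = 1%N by lia.
  have -> : m' = U_(ord0)%MM by apply: mono1_eq; rewrite h1 mdeg1.
  by rewrite mdeg1 hd fU eqxx mulr1 subrr.
have hT : lowdeg 1 T by apply: lowdeg1_ptrunc.
have hX : lowdeg 1 (c *: 'X_ord0 : {mpoly R[1]}).
  apply: lowdegZ => m'; rewrite ltnS leqn0 mdeg_eq0 => /eqP ->.
  by rewrite mcoeffX mnm1_eq0.
have : lowdeg d.+1 (T ^+ d - (c *: 'X_ord0) ^+ d).
  rewrite subrXX (_ : d.+1 = 2 + d.-1)%N; last by lia.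
  apply: lowdegM => //; apply: lowdeg_sum => i.
  apply: (@lowdegW _ _ (1 * (d.-1 - i) + 1 * i)%N).
    have := ltn_ord i; lia.
  by apply: lowdegM; apply: lowdegX.
move/(_ m (ltnSn _)); rewrite mcoeffB => /eqP; rewrite subr_eq0 => /eqP ->.
rewrite exprZn mcoeffZ mpolyXn mcoeffX.
suff -> : (U_(ord0) *+ d)%MM = m by rewrite eqxx mulr1.
by apply: mono1_eq; rewrite -/(mono d) mdeg_mono.
Qed.

Lemma ptrunc_pred k (f : pseries k R) m e :
  f 0%MM = 0 -> (1 < e)%N ->
  ((ptrunc (mdeg m) f) ^+ e)@_m = ((ptrunc (mdeg m).-1 f) ^+ e)@_m.
Proof.
move=> f0 he; set d := mdeg m.
have : lowdeg d.+1 (ptrunc d f ^+ e - ptrunc d.-1 f ^+ e).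
  rewrite subrXX (_ : d.+1 = d + 1)%N; last by lia.
  apply: lowdegM.
    move=> m' hm'; rewrite mcoeffB !mcoeff_ptrunc.
    by rewrite (ltnW hm') (_ : (mdeg m' <= d.-1)%N = true) ?subrr //; lia.
  apply: lowdeg_sum => i.
  apply: (@lowdegW _ _ (1 * (e.-1 - i) + 1 * i)%N).
    have := ltn_ord i; lia.
  by apply: lowdegM; apply: lowdegX; apply: lowdeg1_ptrunc.
move/(_ m (ltnSn _)); rewrite mcoeffB => /eqP; rewrite subr_eq0 => /eqP.
by [].
Qed.

Lemma cong_ptrunc k M r N (f : pseries k R) :
  (forall m, (mdeg m <= N)%N -> f m != 0 -> mdeg m = r %[mod M]) -> cong M r (ptrunc N f).
Proof.
move=> h m; rewrite mcoeff_ptrunc; case: ifP => hm; first exact: h.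
by rewrite eqxx.
Qed.

End OneVar.


Lemma mnm1_inj n (i j : 'I_n) : (U_(i) == U_(j))%MM = (i == j).
Proof.
apply/eqP/eqP => [e|->] //.
have := congr1 (fun m : 'X_{1..n} => m i) e; rewrite !mnm1E eqxx.
by case: eqP.
Qed.

Section FGL.
Variable (A : comNzRingType).

Lemma ptrunc1 k (f : pseries k A) : f 0%MM = 0 ->
  ptrunc 1 f = \sum_i f (U_(i))%MM *: 'X_i.
Proof.
move=> f0; apply/mpolyP => m; rewrite mcoeff_ptrunc [mcoeff _ (\sum_i _)]raddf_sum /=.
under eq_bigr => i _ do rewrite mcoeffZ mcoeffX.
case: (ltngtP (mdeg m) 1) => hm.
- move: hm; rewrite ltnS leqn0 mdeg_eq0 => /eqP ->; rewrite f0 /=.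
  by rewrite big1 // => i _; rewrite mnm1_eq0 mulr0.
- rewrite big1 // => i _.
  case: eqP => [e|]; last by rewrite mulr0.
  by move: hm; rewrite -e mdeg1.
- move/eqP: (hm); case/mdeg1P => i /eqP e; subst m.
  rewrite (bigD1 i) //= eqxx mulr1 big1 ?addr0 // => i' hi'.
  by rewrite mnm1_inj (negbTE hi') mulr0.
Qed.

Lemma pcomp_lin j k (f : pseries j A) (g : 'I_j -> pseries k A) m :
  f 0%MM = 0 -> (forall i, g i 0%MM = 0) -> mdeg m = 1%N ->
  pcomp f g m = \sum_i f (U_(i))%MM * g i m.
Proof.
move=> f0 g0 hm; rewrite pcompE hm ptrunc1 // [comp_mpoly _ (\sum_i _)]raddf_sum.
rewrite [mcoeff _ (\sum_i _)]raddf_sum /=; apply: eq_bigr => i _.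
rewrite comp_mpolyZ comp_mpolyXU -tnth_nth tnth_mktuple mcoeffZ mcoeff_ptrunc.
by rewrite hm.
Qed.

Lemma fgl0 (F : pseries 2 A) : is_fgl F -> F 0%MM = 0.
Proof.
case=> h1 _ _ _; have := congr1 (fun phi => phi 0%MM) h1; rewrite /= pcomp0 => ->.
by rewrite /pvar eq_sym mnm1_eq0.
Qed.

Definition i1 : 'I_2 := lift ord0 ord0.

Lemma fgl_lin (F : pseries 2 A) : is_fgl F ->
  F (U_(ord0))%MM = 1 /\ F (U_(i1))%MM = 1.
Proof.
move=> hF; have F0 := fgl0 hF; case: hF => h1 h2 _ _.
have hU : mdeg (U_(ord0) : 'X_{1..1})%MM = 1%N by rewrite mdeg1.
have := congr1 (fun phi => phi (U_(ord0))%MM) h1.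
have := congr1 (fun phi => phi (U_(ord0))%MM) h2.
rewrite /= !pcomp_lin //; last first.
- by move=> i; rewrite /pair2; case: ifP => _; rewrite /pvar /pzero ?(eq_sym 0%MM) ?mnm1_eq0.
- by move=> i; rewrite /pair2; case: ifP => _; rewrite /pvar /pzero ?(eq_sym 0%MM) ?mnm1_eq0.
rewrite !big_ord_recl !big_ord0 /pair2 /= /pvar /pzero eqxx.
by rewrite !mulr1 !mulr0 !addr0 add0r => -> ->.
Qed.

Lemma fgl_mul0 (F : pseries 2 A) m : is_fgl F -> fgl_mul F m 0%MM = 0.
Proof. by move=> hF; case: m => [|m] //=; rewrite pcomp0 fgl0. Qed.

Lemma fgl_mulU (F : pseries 2 A) m : is_fgl F -> fgl_mul F m (U_(ord0))%MM = m%:R.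
Proof.
move=> hF; have [Fa Fb] := fgl_lin hF.
elim: m => [|m ih] /=; first by rewrite /pzero.
rewrite pcomp_lin ?fgl0 ?mdeg1 //; last first.
  move=> i; rewrite /pair2; case: ifP => _; last exact: fgl_mul0.
  by rewrite /pvar eq_sym mnm1_eq0.
rewrite big_ord_recl big_ord1 /pair2 /= Fa -[lift ord0 ord0]/i1 Fb ih /pvar eqxx !mul1r.
by rewrite -natr1 addrC.
Qed.

End FGL.


Lemma log_mul (A K : comUnitRingType) (iota : {rmorphism A -> K}) (F : pseries 2 A)
  (l : pseries 1 K) :
  is_fgl F -> is_fgl_log iota F l -> forall m mm,
  pcomp l (fun _ => pmap iota (fgl_mul F m)) mm = l mm *+ m.
Proof.
move=> hF [l0 l1 hl]; elim=> [|m ih] mm /=.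
  rewrite (@eq_pcomp _ _ _ _ l _ (fun _ => pzero K 1)) //.
    by rewrite pcomp_zero.
  by move=> i m'; rewrite /pmap /pzero raddf0.
pose G := fun i : 'I_2 => pmap iota (pair2 (pvar A ord0) (fgl_mul F m) i).
have G0 : forall i, G i 0%MM = 0.
  move=> i; rewrite /G /pmap /pair2; case: ifP => _; last by rewrite fgl_mul0 // raddf0.
  by rewrite /pvar eq_sym mnm1_eq0 raddf0.
have F0 : pmap iota F 0%MM = 0 by rewrite /pmap fgl0 // raddf0.
rewrite (@eq_pcomp _ _ _ _ l _ (fun _ => pcomp (pmap iota F) G)) //; last first.
  by move=> i m'; rewrite pmap_pcomp.
rewrite (@pcompA _ _ _ _ l (fun _ => pmap iota F) G) // hl pcompD.
have step : forall i : 'I_2, pcomp (pcomp l (fun _ => pvar K i)) G mm =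
    pcomp l (fun _ => G i) mm.
  move=> i; rewrite -(@pcompA _ _ _ _ l (fun _ => pvar K i) G) //; last first.
    by move=> _; rewrite /pvar eq_sym mnm1_eq0.
  by apply: eq_pcomp => // _ m'; rewrite pcomp_var.
rewrite /padd !step /G /pair2 /=.
rewrite (@eq_pcomp _ _ _ _ l _ (fun i => pvar K i)) //; last first.
  by move=> i m'; rewrite (ord1 i) /pmap /pvar rmorph_nat.
by rewrite pcomp_vars ih mulrS.
Qed.

Lemma unit_cancel (K : comUnitRingType) (x u : K) : u \is a GRing.unit -> x * u = 0 -> x = 0.
Proof. by move=> hu h; rewrite -(mulrK hu x) h mul0r. Qed.

Lemma log_unique (K : comUnitRingType) (l l' f : pseries 1 K) (c : nat) :
  (1 < c)%N -> (forall k, (0 < k)%N -> (k%:R : K) \is a GRing.unit) ->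
  f 0%MM = 0 -> f (U_(ord0))%MM = c%:R ->
  l 0%MM = 0 -> l' 0%MM = 0 -> l (U_(ord0))%MM = 1 -> l' (U_(ord0))%MM = 1 ->
  (forall mm, pcomp l (fun _ => f) mm = l mm *+ c) ->
  (forall mm, pcomp l' (fun _ => f) mm = l' mm *+ c) ->
  forall mm, l mm = l' mm.
Proof.
move=> hc hu f0 fU l0 l'0 l1 l'1 hl hl' mm.
move: {2}(mdeg mm) (erefl (mdeg mm)) => d; elim/ltn_ind: d mm => d ih mm hd.
case: (ltngtP d 1) => hd1.
- have -> : mm = 0%MM by apply/eqP; rewrite -mdeg_eq0 hd; lia.
  by rewrite l0 l'0.
- have E := hl mm; have E' := hl' mm.
  rewrite pcomp1E big_ord_recr /= in E; rewrite pcomp1E big_ord_recr /= in E'.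
  rewrite -mono_mdeg (@ptrunc_top _ f c%:R mm f0 fU) in E.
  rewrite -mono_mdeg (@ptrunc_top _ f c%:R mm f0 fU) in E'.
  set S := \sum_(i < _) _ in E; set S' := \sum_(i < _) _ in E'.
  have eS : S = S'.
    rewrite /S /S'; apply: eq_bigr => e _; congr (_ * _).
    by apply: (ih e) => //; rewrite ?mdeg_mono //= -hd.
  apply/eqP; rewrite -subr_eq0; apply/eqP; apply: (@unit_cancel _ _ ((c ^ d - c)%:R)).
    by apply: hu; rewrite subn_gt0 -{1}(expn1 c) ltn_exp2l.
  rewrite natrB; last by rewrite -{1}(expn1 c) leq_exp2l //; lia.
  rewrite natrX -hd.
  rewrite -[l mm *+ c]mulr_natr in E; rewrite -[l' mm *+ c]mulr_natr -eS in E'.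
  set x := l mm in E *; set y := l' mm in E' *; set C := (c%:R : K) in E E' *.
  have -> : (x - y) * (C ^+ mdeg mm - C) =
     (S + x * C ^+ mdeg mm - x * C) - (S + y * C ^+ mdeg mm - y * C) by ring.
  by rewrite E E' !subrr.
- have -> : mm = U_(ord0)%MM by apply: mono1_eq; rewrite mdeg1 hd.
  by rewrite l1 l'1.
Qed.


Unset Implicit Arguments.
Set Strict Implicit.

Theorem corollary3p1p6 (p n : nat) (A K : comUnitRingType)
    (iota : {rmorphism A -> K}) (F : pseries 2 A) (l : pseries 1 K) :
  prime p ->
  Zp_local_algebra p A ->
  torsion_free A ->
  is_rationalization iota ->
  is_fgl F ->
  is_fgl_log iota F l ->
  (pn_typical iota p n F <->
   supported_in l (fun d => exists i : nat, d = (p ^ (n * i))%N)).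
Proof.
move=> pp _ _ [hu hinj _] hF hlog.
have hp : (1 < p)%N := prime_gt1 pp.
have hlog' := hlog; case: hlog' => l0 l1 _.
pose f := pmap iota (fgl_mul F p).
have f0 : f 0%MM = 0 by rewrite /f /pmap fgl_mul0 // raddf0.
have fU : f U_(ord0)%MM = p%:R by rewrite /f /pmap fgl_mulU // rmorph_nat.
have hl : forall mm, pcomp l (fun _ => f) mm = l mm *+ p := log_mul hF hlog p.
have hcancel : forall (x : K) k, (0 < k)%N -> x * k%:R = 0 -> x = 0.
  by move=> x k hk; apply: unit_cancel; apply: hu.
have l_mono1 : l (mono 1) = 1.
  by rewrite (_ : mono 1 = U_(ord0)%MM) //; apply: mono1_eq; rewrite mdeg_mono mdeg1.
have l_mono0 : l (mono 0) = 0.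
  by rewrite (_ : mono 0 = 0%MM) //; apply: mono1_eq; rewrite mdeg_mono mdeg0.
split.
- case=> htyp hgrad.
  have ptyp := htyp l hlog.
  have hfc : forall m, f m != 0 -> mdeg m = 1 %[mod p ^ n - 1].
    move=> m; rewrite /f /pmap.
    have [->|hm _] := eqVneq (fgl_mul F p m) 0; first by rewrite raddf0 eqxx.
    by case: (hgrad m hm) => j ->; rewrite addnC modnMDl.
  have hT : forall N, cong (p ^ n - 1) 1 (ptrunc N f).
    by move=> N; apply: cong_ptrunc => m _; apply: hfc.
  have claim : forall k, ~~ (n %| k)%N -> l (mono (p ^ k)) = 0.
    elim/ltn_ind => k ih hk.
    set d := (p ^ k)%N; set m := mono d.
    have hmd : mdeg m = d by rewrite mdeg_mono.
    have hk0 : (0 < k)%N by move: hk; case: k {ih d m hmd} => //; rewrite dvdn0.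
    have hd1 : (1 < d)%N by rewrite /d -(expn0 p) ltn_exp2l.
    have E := hl m.
    rewrite pcomp1E big_ord_recr /= big1 ?add0r in E; last first.
      move=> e _ /=.
      have [le0|hle] := eqVneq (l (mono e)) 0; first by rewrite le0 mul0r.
      case: (ptyp _ hle) => i; rewrite mdeg_mono => ei.
      have hik : (i < k)%N.
        by rewrite -(ltn_exp2l _ _ hp) -ei -/d -hmd.
      have hni : (n %| i)%N.
        by apply: contraT => hni; move: hle; rewrite ei ih ?eqxx.
      have ce : e = 1 %[mod p ^ n - 1].
        rewrite ei -(divnK hni) mulnC NT1 //; lia.
      have hc := congX (e := e) (hT (mdeg m)).
      suff -> : ((ptrunc (mdeg m) f) ^+ e)@_m = 0 by rewrite mulr0.
      apply/eqP; apply: contraT => hne.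
      have := hc _ hne; rewrite mul1n ce hmd => /eqP.
      by rewrite (negbTE (NT2 hp hk)).
    rewrite -mono_mdeg (@ptrunc_top _ f p%:R m f0 fU) hmd in E.
    rewrite -/m; apply: (hcancel _ (p ^ d - p)%N).
      by rewrite subn_gt0 -{1}(expn1 p) ltn_exp2l.
    rewrite natrB; last by rewrite -{1}(expn1 p) leq_exp2l //; lia.
    by rewrite mulrBr natrX E mulr_natr subrr.
  move=> mm hmm; case: (ptyp mm hmm) => k hk.
  have [hnk|hnk] := boolP (n %| k)%N.
    by exists (k %/ n)%N; rewrite hk mulnC divnK.
  by move: hmm; rewrite (mono_mdeg mm) hk claim ?eqxx.
- move=> hsup.
  have hl1c : forall mm, l mm != 0 -> mdeg mm = 1 %[mod p ^ n - 1].
    by move=> mm h; case: (hsup _ h) => i ->; apply: NT1; lia.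
  split.
  + move=> l' hlog2 mm hmm.
    have hlog2' := hlog2; case: hlog2' => l'0 l'1 _.
    have uniq : forall mm, l mm = l' mm.
      apply: (@log_unique K l l' (pmap iota (fgl_mul F 2)) 2) => //.
      * by rewrite /pmap fgl_mul0 // raddf0.
      * by rewrite /pmap fgl_mulU // rmorph_nat.
      * exact: (log_mul hF hlog 2).
      * exact: (log_mul hF hlog2 2).
    case: (hsup mm _) => [|i ->]; first by rewrite uniq.
    by exists (n * i)%N.
  + have claim : forall d mm, mdeg mm = d -> f mm != 0 -> d = 1 %[mod p ^ n - 1].
      elim/ltn_ind => d ih mm hd hfm.
      apply/eqP; apply: contraT => hne.
      case: d ih hd hne => [|d'] ih hd hne.
        by move: hfm; move/eqP: hd; rewrite mdeg_eq0 => /eqP ->; rewrite f0 eqxx.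
      have E := hl mm.
      have lmm : l mm = 0.
        apply/eqP; apply: contraT => h; have := hl1c _ h.
        by rewrite hd => e; rewrite e eqxx in hne.
      rewrite lmm mul0rn pcomp1E in E.
      move: E; rewrite hd big_ord_recl big_ord_recl /= l_mono0 l_mono1 mul0r add0r mul1r.
      rewrite (_ : bump 0 0 = 1%N) // expr1 mcoeff_ptrunc hd leqnn big1 ?addr0; first by move=> E; move: hfm; rewrite E eqxx.
      move=> i _.
      set e := (bump 0 (bump 0 i)).
      have he : (1 < e)%N by rewrite /e /bump /=; lia.
      have [le0|hle] := eqVneq (l (mono e)) 0; first by rewrite le0 mul0r.
      have ce := hl1c _ hle; rewrite mdeg_mono in ce.
      rewrite -hd (ptrunc_pred _ f0 he) hd /=.
      have hc : cong (p ^ n - 1) 1 (ptrunc d' f).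
        apply: cong_ptrunc => m' hm' hfm'.
        by apply: (ih (mdeg m')) => //; lia.
      have := congX (e := e) hc; rewrite mul1n => hc'.
      suff -> : ((ptrunc d' f) ^+ e)@_mm = 0 by rewrite mulr0.
      apply/eqP; apply: contraT => hne'.
      have := hc' _ hne'; rewrite ce hd => e'.
      by rewrite e' eqxx in hne.
    move=> m hm.
    have hfm : f m != 0.
      rewrite /f /pmap; apply: contra hm => /eqP h; apply/eqP; apply: hinj.
      by rewrite h raddf0.
    apply: NT3; last exact: (claim _ m erefl hfm).
    rewrite lt0n mdeg_eq0; apply: contra hfm => /eqP ->.
    by rewrite f0.
Qed.
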